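(* Let $m\ge 1$ and $n\ge 2$ be integers. For every $\mathbf a\in mB^n$, $$f_m(n,2,\mathbf a)=mn+m.$$
   Context: $mB^n=\{0,1,\ldots,m\}^n\subseteq\mathbb{R}^n$. A family of affine hyperplanes in $\mathbb{R}^n$ is a finite multiset, and a point is covered $j$ times if exactly $j$ members of the multiset contain it. For $\mathbf a\in mB^n$ and a positive integer $k$, $f_m(n,k,\mathbf a)$ denotes the minimum size of a family of affine hyperplanes such that every point of $mB^n\setminus\{\mathbf a\}$ is covered at least $k$ times and $\mathbf a$ lies on no member of the family. *)

(* Defs.v *)
From HB Require Import structures.
From mathcomp Require Import all_boot all_order all_algebra.
From mathcomp Require Import Rstruct.
From Stdlib Require Import Rdefinitions.
Set Implicit Arguments. Unset Strict Implicit. Unset Printing Implicit Defensive.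
Import Order.TTheory GRing.Theory Num.Theory.
Local Open Scope ring_scope.

(* An affine hyperplane of R^n is {x | c . x = b} with c <> 0; we encode it
   by its data (c, b). A family of hyperplanes is a finite multiset, i.e. a
   list of such data (repetitions allowed). *)
Definition hyperplane (n : nat) : Type := ('rV[R]_n * R)%type.

Definition is_hyperplane n (h : hyperplane n) : bool := h.1 != 0.

Definition on_hyperplane n (h : hyperplane n) (x : 'rV[R]_n) : bool :=
  \sum_(i < n) h.1 0 i * x 0 i == h.2.

Definition cover_count n (F : seq (hyperplane n)) (x : 'rV[R]_n) : nat :=
  count (fun h => on_hyperplane h x) F.

(* points of the grid mB^n = {0,...,m}^n, encoded by their coordinates *)
Definition grid_point (m n : nat) (p : {ffun 'I_n -> 'I_m.+1}) : 'rV[R]_n :=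
  \row_(i < n) ((p i : nat)%:R : R).

Definition admissible (m n k : nat) (a : {ffun 'I_n -> 'I_m.+1})
    (F : seq (hyperplane n)) : Prop :=
  all (@is_hyperplane n) F /\
  (forall p : {ffun 'I_n -> 'I_m.+1}, p != a ->
     leq k (cover_count F (grid_point p))) /\
  cover_count F (grid_point a) = 0%N.

Definition f_value_is (m n k : nat) (a : {ffun 'I_n -> 'I_m.+1}) (v : nat)
    : Prop :=
  (exists F, admissible k a F /\ size F = v) /\
  (forall F, admissible k a F -> leq v (size F)).

(* Main.v *)
Require Import Defs.
From mathcomp Require Import all_boot all_order all_algebra.
From mathcomp Require Import Rstruct zify.
From Stdlib Require Import Rdefinitions.
Set Implicit Arguments. Unset Strict Implicit. Unset Printing Implicit Defensive.
Import Order.TTheory GRing.Theory Num.Theory.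
Local Open Scope ring_scope.

Definition Sb (m b : nat) : R :=
  \sum_(j < m.+1) (-1)^+j * ('C(m,j))%:R * ((j%:R : R)^+b).

Lemma Sb_ext m b : Sb m b =
  \sum_(j < m.+2) (-1)^+j * ('C(m,j))%:R * ((j%:R : R)^+b).
Proof. rewrite /Sb [in RHS]big_ord_recr /= bin_small //. by rewrite mulr0 mul0r addr0. Qed.

Lemma Sb_step m b : Sb m.+1 b =
  Sb m b - \sum_(j < m.+1) (-1)^+j * ('C(m,j))%:R * (((j.+1)%:R : R)^+b).
Proof.
rewrite [Sb m b]Sb_ext /Sb big_ord_recl /=.
rewrite [X in _ = X - _]big_ord_recl /= !bin0 -addrA; congr (_ + _).
rewrite -sumrB; apply: eq_bigr => i _.
rewrite /bump /= add1n binS natrD exprS.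
rewrite mulrDr mulrDl. by rewrite !mulN1r !mulNr.
Qed.

Lemma Sb_tail m b : (forall k, leq k.+1 b -> Sb m k = 0) -> Sb m b - \sum_(k < b.+1) 'C(b, k)%:R * Sb m k = 0.
move=> IH.
rewrite big_ord_recr /= binn mul1r opprD addrA addrAC subrr sub0r.
rewrite big1 ?oppr0 // => k _.
by rewrite IH ?mulr0.
Qed.

Lemma Sb_zero (m b : nat) : leq b.+1 m -> Sb m b = 0.
Proof.
elim: m b => [//|m IH] b hb.
rewrite Sb_step.
have -> : \sum_(j < m.+1) (-1)^+j * ('C(m,j))%:R * (((j.+1)%:R : R)^+b)
   = \sum_(k < b.+1) ('C(b,k))%:R * Sb m k.
  rewrite /Sb.
  under eq_bigr => j _ do rewrite -[(nat_of_ord j).+1]add1n natrD addrC exprD1n mulr_sumr.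
  rewrite exchange_big /=; apply: eq_bigr => k _.
  rewrite mulr_sumr; apply: eq_bigr => j _.
  by rewrite mulrnAl -mulr_natl mul1r mulrnAr.
apply: Sb_tail => k hk; apply: IH; exact: leq_trans hk hb.
Qed.

Definition wt (m n : nat) (i0 i : 'I_n) (j : nat) : R :=
  if i == i0 then (j == 0%N)%:R else (-1)^+j * ('C(m,j))%:R.
Definition Wq (m n : nat) (i0 : 'I_n) (q : {ffun 'I_n -> 'I_m.+1}) : R :=
  \prod_i wt m i0 i (q i).
Definition mono (m n : nat) (be : 'I_n -> nat) (q : {ffun 'I_n -> 'I_m.+1}) : R :=
  \prod_i ((q i : nat)%:R)^+(be i).
Definition lin (m n : nat) (h : hyperplane n) (q : {ffun 'I_n -> 'I_m.+1}) : R :=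
  \sum_i h.1 0 i * (q i : nat)%:R - h.2.
Definition lam (m n : nat) (i0 : 'I_n) (h : hyperplane n) (q : {ffun 'I_n -> 'I_m.+1})
  : {poly R} := 'X * (h.1 0 i0)%:P + (lin h q)%:P.
Definition gF (m n : nat) (i0 : 'I_n) (F : seq (hyperplane n)) (be : 'I_n -> nat)
  : {poly R} :=
  \sum_(q : {ffun 'I_n -> 'I_m.+1}) (Wq i0 q * mono be q) *: \prod_(h <- F) lam i0 h q.

Lemma base_prod (m n : nat) (i0 : 'I_n) (be : 'I_n -> nat) :
  \sum_(q : {ffun 'I_n -> 'I_m.+1}) Wq i0 q * mono be q =
  \prod_i \sum_(j : 'I_m.+1) wt m i0 i j * ((j : nat)%:R)^+(be i).
Proof.
rewrite bigA_distr_bigA; apply: eq_bigr => q _.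
by rewrite /Wq /mono -big_split.
Qed.

Lemma base_zero (m n : nat) (i0 : 'I_n) (be : 'I_n -> nat) :
  (leq (\sum_i be i).+1 (m * n.-1))%N ->
  \sum_(q : {ffun 'I_n -> 'I_m.+1}) Wq i0 q * mono be q = 0.
Proof.
move=> hs; rewrite base_prod.
case: (posnP (be i0)) => hb0.
  case: (pickP (fun i => (i != i0) && leq (be i).+1 m)) => [i /andP[hi hbi]|H].
    rewrite (bigD1 i) //=.
    have -> : \sum_(j < m.+1) wt m i0 i j * j%:R ^+ be i = Sb m (be i).
      rewrite /Sb; apply: eq_bigr => j _; by rewrite /wt (negbTE hi).
    by rewrite Sb_zero // mul0r.
  exfalso.
  have : (leq (m * n.-1) (\sum_i be i))%N.
    rewrite (bigD1 i0) //= hb0 add0n.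
    apply: (@leq_trans (\sum_(i | i != i0) m)%N).
      by rewrite sum_nat_const cardC1 card_ord mulnC.
    apply: leq_sum => i hi; move: (H i); rewrite hi /= => /negbT; by rewrite -leqNgt.
  by rewrite leqNgt hs.
rewrite (bigD1 i0) //= big_ord_recl /wt eqxx /= expr0n.
rewrite (negbTE (lt0n_neq0 hb0)) mulr0 add0r big1 ?mul0r // => j _.
exact: mul0r.
Qed.

Lemma lam_coef (m n : nat) (i0 : 'I_n) h (q : {ffun 'I_n -> 'I_m.+1}) (P : {poly R}) e :
  (lam i0 h q * P)`_e =
  h.1 0 i0 * (if e is e'.+1 then P`_e' else 0) + lin h q * P`_e.
Proof.
rewrite /lam mulrDl coefD -mulrA coefXM !coefCM.
by case: e => [|e] //=; rewrite mulr0.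
Qed.

Lemma mono_inc (m n : nat) (be : 'I_n -> nat) (q : {ffun 'I_n -> 'I_m.+1}) (i : 'I_n) :
  mono (fun k => be k + (k == i))%N q = mono be q * (q i : nat)%:R.
Proof.
rewrite /mono; under eq_bigr do rewrite exprD.
rewrite big_split /=; congr (_ * _).
rewrite (bigD1 i) //= eqxx expr1 big1 ?mulr1 // => k /negbTE ->.
by rewrite expr0.
Qed.

Lemma sum_inc (n : nat) (be : 'I_n -> nat) (i : 'I_n) :
  (\sum_k (be k + (k == i)) = (\sum_k be k).+1)%N.
Proof.
rewrite big_split /= -addn1; congr (_ + _); rewrite (bigD1 i) //= eqxx big1 // => k /negbTE ->.
by [].
Qed.

Lemma gF_coef (m n : nat) (i0 : 'I_n) F : forall be e,
  (leq (size F + \sum_i be i).+1 (e + m * n.-1))%N -> (gF m i0 F be)`_e = 0.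
Proof.
elim: F => [|h F IH] be e hs.
  rewrite /gF coef_sum.
  under eq_bigr do rewrite big_nil coefZ coef1.
  case: e hs => [|e] hs.
    under eq_bigr do rewrite mulr1.
    by apply: base_zero.
  by rewrite big1 // => q _; rewrite mulr0.
rewrite /gF coef_sum.
under eq_bigr do rewrite coefZ big_cons lam_coef mulrDr.
rewrite big_split /=.
have -> : \sum_(q : {ffun 'I_n -> 'I_m.+1})
   Wq i0 q * mono be q * (h.1 0 i0 * (if e is e'.+1 then (\prod_(j <- F) lam i0 j q)`_e' else 0)) = 0.
  case: e hs => [|e] hs.
    by rewrite big1 // => q _; rewrite !mulr0.
  transitivity (h.1 0 i0 * (gF m i0 F be)`_e).
    rewrite /gF coef_sum mulr_sumr; apply: eq_bigr => q _.
    by rewrite coefZ mulrCA.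
  rewrite IH ?mulr0 //; move: hs => /=; lia.
rewrite add0r.
transitivity (\sum_i h.1 0 i * (gF m i0 F (fun k => be k + (k == i))%N)`_e
   - h.2 * (gF m i0 F be)`_e).
  under eq_bigr => q _ do rewrite /lin mulrBl mulr_suml mulrBr mulr_sumr.
  rewrite sumrB exchange_big /=; congr (_ - _).
    apply: eq_bigr => i _; rewrite /gF coef_sum mulr_sumr; apply: eq_bigr => q _.
    rewrite coefZ mono_inc !mulrA [h.1 0 i * Wq i0 q]mulrC.
    by rewrite -[Wq i0 q * h.1 0 i * _]mulrA [h.1 0 i * _]mulrC mulrA.
  rewrite /gF coef_sum mulr_sumr; apply: eq_bigr => q _.
  by rewrite coefZ mulrCA.
rewrite (IH be e); last by move: hs => /=; lia.
rewrite mulr0 subr0 big1 // => i _; rewrite IH ?mulr0 //.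
move: hs => /= H; rewrite sum_inc addnS -addSn; exact: H.
Qed.

Lemma dvd_count (s : seq {poly R}) (x : R) : forall k : nat,
  leq k (count (fun p => root p x) s) -> ('X - x%:P)^+k %| \prod_(p <- s) p.
Proof.
elim: s => [|p s IH] k /=.
  by rewrite leqn0 => /eqP ->; rewrite expr0 dvd1p.
case hr: (root p x) => /= hk; rewrite big_cons.
  case: k hk => [|k] hk; first by rewrite expr0 dvd1p.
  rewrite exprS; apply: dvdp_mul; first by rewrite -root_factor_theorem.
  by apply: IH; rewrite -ltnS.
by apply: dvdp_mull; apply: IH.
Qed.

Lemma dvd_prod_sq (s : seq R) (g : {poly R}) : uniq s ->
  (forall x, x \in s -> ('X - x%:P)^+2 %| g) ->
  \prod_(x <- s) ('X - x%:P)^+2 %| g.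
Proof.
elim: s => [|x s IH] /=; first by rewrite big_nil dvd1p.
move=> /andP[hx hu] H; rewrite big_cons Gauss_dvdp.
  rewrite H ?mem_head //=; apply: IH => // y hy; apply: H.
  by rewrite in_cons hy orbT.
apply: coprimep_expl; rewrite coprimep_sym coprimep_XsubC /root horner_prod.
rewrite prodf_seq_neq0; apply/allP => y hy /=.
rewrite horner_exp hornerXsubC expf_neq0 // subr_eq0.
by apply: contraNneq hx => ->.
Qed.

Lemma size_prod_sq (s : seq R) :
  size (\prod_(x <- s) ('X - x%:P)^+2) = (2 * size s).+1.
Proof.
have -> : \prod_(x <- s) ('X - x%:P)^+2 = \prod_(x <- s ++ s) ('X - x%:P).
  by under eq_bigr do rewrite expr2; rewrite big_split /= -big_cat.
by rewrite size_prod_XsubC size_cat mul2n addnn.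
Qed.

Lemma lam_eval (m n : nat) (i0 : 'I_n) h (q p : {ffun 'I_n -> 'I_m.+1}) :
  (q i0 : nat) = 0%N -> (forall i, i != i0 -> p i = q i) ->
  (lam i0 h q).[(p i0 : nat)%:R] = \sum_i h.1 0 i * (p i : nat)%:R - h.2.
Proof.
move=> hq hp; rewrite /lam /lin !hornerE.
rewrite [\sum_i h.1 0 i * (q i : nat)%:R](bigD1 i0) //= hq mulr0 add0r.
rewrite [\sum_i h.1 0 i * (p i : nat)%:R](bigD1 i0) //= [_ * h.1 0 i0]mulrC.
congr (_ + _ - _); apply: eq_bigr => i hi; by rewrite hp.
Qed.

Lemma on_hypE (m n : nat) (h : hyperplane n) (p : {ffun 'I_n -> 'I_m.+1}) :
  on_hyperplane h (grid_point p) = (\sum_i h.1 0 i * (p i : nat)%:R == h.2).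
Proof. by rewrite /on_hyperplane /grid_point; under eq_bigr do rewrite mxE. Qed.

Lemma Wq_zero (m n : nat) (i0 : 'I_n) (q : {ffun 'I_n -> 'I_m.+1}) :
  (q i0 : nat) != 0%N -> Wq i0 q = 0.
Proof.
by move=> hq; rewrite /Wq (bigD1 i0) //= /wt eqxx (negbTE hq) mul0r.
Qed.

Lemma mono0 (m n : nat) (q : {ffun 'I_n -> 'I_m.+1}) : mono (fun _ => 0%N) q = 1.
Proof. by rewrite /mono big1. Qed.

Lemma lower (m n : nat) (a : {ffun 'I_n -> 'I_m.+1}) (i0 : 'I_n) F :
  admissible 2 a F -> leq (2 * m + m * n.-1) (size F).
Proof.
move=> [_ [hcov ha]].
pose g := gF m i0 F (fun _ => 0%N).
have hsz : leq (size g) (size F + 1 - m * n.-1).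
  apply/leq_sizeP => j hj; apply: (@gF_coef m n i0 F (fun _ => 0%N) j); rewrite big1 // addn0; lia.
have hdiv : forall j : 'I_m.+1, j != a i0 -> ('X - ((j : nat)%:R)%:P)^+2 %| g.
  move=> j hj; rewrite /g /gF; apply: (big_ind (fun p : {poly R} => ('X - ((j : nat)%:R)%:P)^+2 %| p)) => [|x y hx hy|q _].
  - exact: dvdp0.
  - exact: dvdp_add.
  case: (eqVneq (q i0 : nat) 0%N) => hq; last by rewrite Wq_zero // mul0r scale0r dvdp0.
  rewrite -mul_polyC; apply: dvdp_mull.
  have -> : \prod_(h <- F) lam i0 h q = \prod_(p <- map (fun h => lam i0 h q) F) p.
    by rewrite big_map.
  apply: dvd_count; rewrite count_map.
  pose p := [ffun i => if i == i0 then j else q i].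
  have hp : p != a by apply: contra hj => /eqP <-; rewrite ffunE eqxx.
  apply: leq_trans (hcov p hp) _.
  rewrite /cover_count; apply: sub_count => h /= hh.
  have -> : ((j : nat)%:R : R) = (p i0 : nat)%:R by rewrite ffunE eqxx.
  rewrite /root lam_eval //; last by move=> i /negbTE hi; rewrite ffunE hi.
  by rewrite subr_eq0 -on_hypE.
have hg0 : g.[(a i0 : nat)%:R] != 0.
  pose qa := [ffun i => if i == i0 then ord0 else a i].
  have hqa : (qa i0 : nat) = 0%N by rewrite ffunE eqxx.
  rewrite /g /gF horner_sum (bigD1 qa) //= [X in _ + X]big1 ?addr0.
    rewrite hornerZ mono0 mulr1 mulf_neq0 //.
      apply/prodf_neq0 => i _; rewrite /wt; case: (eqVneq i i0) => [->|hi].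
        by rewrite hqa eqxx oner_eq0.
      rewrite mulf_neq0 ?expf_neq0 ?oppr_eq0 ?oner_eq0 // pnatr_eq0 -lt0n bin_gt0.
      by rewrite ffunE (negbTE hi) -ltnS.
    rewrite horner_prod prodf_seq_neq0; apply/allP => h hF /=.
    rewrite lam_eval //; last by move=> i /negbTE hi; rewrite ffunE hi.
    rewrite subr_eq0 -on_hypE; apply: contraT; rewrite negbK => hh.
    move: ha; rewrite /cover_count => /eqP; rewrite -leqn0 leqNgt -has_count.
    by move/hasPn => /(_ h hF); rewrite hh.
  move=> q hq.
  case: (eqVneq (q i0 : nat) 0%N) => h0; last by rewrite hornerZ Wq_zero // !mul0r.
  rewrite hornerZ horner_prod; apply/eqP; rewrite mulf_eq0 prodf_seq_eq0; apply/orP; right.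
  pose p := [ffun i => if i == i0 then a i0 else q i].
  have hp : p != a.
    apply: contra hq => /eqP hpa; apply/eqP/ffunP => i; rewrite ffunE.
    case: eqP => [->|/eqP hi]; first by apply: val_inj; rewrite /= h0.
    by move/ffunP: hpa => /(_ i); rewrite ffunE (negbTE hi) => <-.
  have := hcov p hp; rewrite /cover_count => hc.
  have : has (fun h => on_hyperplane h (grid_point p)) F.
    by rewrite has_count; apply: leq_trans hc.
  move=> /hasP [h hF hh]; apply/hasP; exists h => //=.
  have -> : ((a i0 : nat)%:R : R) = (p i0 : nat)%:R by rewrite ffunE eqxx.
  rewrite lam_eval //; last by move=> i /negbTE hi; rewrite ffunE hi.
  by rewrite subr_eq0 -on_hypE.
have gnz : g != 0 by apply: contraNneq hg0 => ->; rewrite horner0.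
pose s := [seq ((nat_of_ord j)%:R : R) | j : 'I_m.+1 <- enum (predC1 (a i0))].
have hu : uniq s.
  rewrite map_inj_uniq ?enum_uniq // => x y /eqP; rewrite eqr_nat => /eqP.
  exact: val_inj.
have hs : forall x, x \in s -> ('X - x%:P)^+2 %| g.
  by move=> x /mapP [j]; rewrite mem_enum => hj ->; apply: hdiv.
have := dvdp_leq gnz (dvd_prod_sq hu hs).
rewrite size_prod_sq size_map -cardE cardC1 card_ord /=.
move: hsz; move: (muln m n.-1) (size g) (size F) => M G S; lia.
Qed.

Definition e_row (n : nat) (i : 'I_n) : 'rV[R]_n := \row_k ((k == i)%:R).
Definition axis_row (m n : nat) (a : {ffun 'I_n -> 'I_m.+1}) (i : 'I_n)
  : seq (hyperplane n) := [seq (e_row i, (bump (a i) j)%:R) | j <- iota 0 m].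
Definition axis (m n : nat) (a : {ffun 'I_n -> 'I_m.+1}) : seq (hyperplane n) :=
  flatten [seq axis_row a i | i <- enum 'I_n].
Definition dcoef (m n : nat) (a : {ffun 'I_n -> 'I_m.+1}) (r : nat) : 'rV[R]_n :=
  \row_k (((bump (a k) r)%:R - (a k : nat)%:R)^-1).
Definition diagh (m n : nat) (a : {ffun 'I_n -> 'I_m.+1}) (r : nat) : hyperplane n :=
  (dcoef a r, 1 + \sum_k dcoef a r 0 k * (a k : nat)%:R).
Definition diag (m n : nat) (a : {ffun 'I_n -> 'I_m.+1}) : seq (hyperplane n) :=
  [seq diagh a r | r <- iota 0 m].
Definition Fam (m n : nat) (a : {ffun 'I_n -> 'I_m.+1}) := axis a ++ diag a.

Lemma sumn_map_const (T : Type) (s : seq T) (f : T -> nat) c :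
  (forall x, f x = c) -> sumn (map f s) = muln c (size s).
Proof. by move=> hf; elim: s => [|x s IH] /=; rewrite ?muln0 // hf IH mulnS. Qed.

Lemma size_Fam (m n : nat) (a : {ffun 'I_n -> 'I_m.+1}) :
  size (Fam a) = (m * n + m)%N.
Proof.
rewrite /Fam size_cat /diag size_map size_iota /axis size_flatten /shape -map_comp.
rewrite (@sumn_map_const _ _ _ m) ?size_enum_ord // => i /=.
by rewrite size_map size_iota.
Qed.

Lemma on_e_row (m n : nat) (i : 'I_n) (v : R) (p : {ffun 'I_n -> 'I_m.+1}) :
  on_hyperplane (e_row i, v) (grid_point p) = ((p i : nat)%:R == v).
Proof.
rewrite on_hypE /= (bigD1 i) //= big1 ?addr0 /e_row ?mxE ?eqxx ?mul1r //.
by move=> k /negbTE hk; rewrite mxE hk mul0r.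
Qed.

Lemma axis_count (m n : nat) (a p : {ffun 'I_n -> 'I_m.+1}) :
  leq (\sum_i ((p i != a i) : nat))
      (count (fun h => on_hyperplane h (grid_point p)) (axis a)).
Proof.
rewrite /axis count_flatten -map_comp sumnE big_map big_enum /=.
apply: leq_sum => i _.
case: (eqVneq (p i) (a i)) => [//|hi] /=.
rewrite -has_count /axis_row has_map; apply/hasP.
exists (unbump (a i) (p i)).
  rewrite mem_iota /= add0n /unbump; move: (ltn_ord (p i)) (ltn_ord (a i)) hi.
  move: (p i) (a i) => x y; move=> hx hy /eqP hxy.
  have : (x : nat) <> y by move=> h; apply: hxy; apply: val_inj.
  lia.
rewrite /= on_e_row unbumpK //.
Qed.

Lemma ord_neq_nat (m : nat) (x y : 'I_m.+1) : x != y -> (x : nat) != y.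
Proof. by apply: contra => /eqP h; apply/eqP; apply: val_inj. Qed.

Lemma unbump_in (m : nat) (x y : 'I_m.+1) : x != y -> unbump y x \in iota 0 m.
Proof.
move=> /ord_neq_nat hxy; rewrite mem_iota /= add0n /unbump.
move: (ltn_ord x) (ltn_ord y) hxy; move: (x : nat) (y : nat) => u v hu hv /eqP huv.
lia.
Qed.

Lemma diag_hit (m n : nat) (a p : {ffun 'I_n -> 'I_m.+1}) (i : 'I_n) :
  p i != a i -> (forall k, k != i -> p k = a k) ->
  has (fun h => on_hyperplane h (grid_point p)) (diag a).
Proof.
move=> hi hk; rewrite /diag has_map; apply/hasP.
exists (unbump (a i) (p i)); first exact: unbump_in.
rewrite /= on_hypE /diagh /=.
set c := dcoef a (unbump (a i) (p i)).
rewrite (bigD1 i) //= [\sum_k c 0 k * (a k : nat)%:R](bigD1 i) //=.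
have -> : \sum_(k | k != i) c 0 k * (p k : nat)%:R
        = \sum_(k | k != i) c 0 k * (a k : nat)%:R.
  by apply: eq_bigr => k hk'; rewrite hk.
rewrite addrA; apply/eqP; congr (_ + _).
have hc : c 0 i = ((p i : nat)%:R - (a i : nat)%:R)^-1.
  by rewrite /c /dcoef mxE unbumpK // inE ord_neq_nat.
have hd : ((p i : nat)%:R - (a i : nat)%:R : R) != 0.
  by rewrite subr_eq0 eqr_nat ord_neq_nat.
rewrite hc; move: hd; set d := (_ - _) => hd.
have -> : ((p i : nat)%:R : R) = d + (a i : nat)%:R by rewrite /d subrK.
by rewrite mulrDr mulVf.
Qed.

Lemma upper (m n : nat) (a : {ffun 'I_n -> 'I_m.+1}) :
  leq 2 n -> admissible 2 a (Fam a).
Proof.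
move=> hn.
have hn0 : leq 1 n by apply: leq_trans hn.
pose i0 : 'I_n := Ordinal hn0.
split; [|split].
- rewrite /Fam all_cat; apply/andP; split; apply/allP => h.
    move/flattenP => [s /mapP [i _ ->] /mapP [j _ ->]].
    rewrite /is_hyperplane /=; apply/eqP => /rowP /(_ i).
    by rewrite !mxE eqxx => /eqP; rewrite oner_eq0.
  move/mapP => [r _ ->]; rewrite /is_hyperplane /=.
  apply/eqP => /rowP /(_ i0); rewrite !mxE => /eqP.
  by rewrite invr_eq0 subr_eq0 eqr_nat eq_sym (negbTE (neq_bump _ _)).
- move=> p hp; rewrite /cover_count /Fam count_cat.
  have hA := axis_count a p.
  case: (pickP (fun i => p i != a i)) => [i hi | H]; last first.
    by case/eqP: hp; apply/ffunP => i; apply/eqP; move: (H i) => /negbFE.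
  case: (pickP (fun k => (k != i) && (p k != a k))) => [k /andP[hk hk'] | H2].
    have h2 : leq 2 (\sum_i ((p i != a i) : nat)).
      by rewrite (bigD1 i) //= (bigD1 k) //= hi hk' addnA leq_addr.
    exact: leq_trans h2 (leq_trans hA (leq_addr _ _)).
  have hB := diag_hit (i := i) hi.
  have : has (fun h => on_hyperplane h (grid_point p)) (diag a).
    apply: hB => k hk; move: (H2 k); rewrite hk /= => /negbFE /eqP //.
  rewrite has_count => hB'.
  have h1 : leq 1 (\sum_i ((p i != a i) : nat)) by rewrite (bigD1 i) //= hi.
  have := leq_add (leq_trans h1 hA) hB'; by [].
- apply/eqP; rewrite /cover_count /Fam count_cat addn_eq0; apply/andP; split;
    rewrite eqn0Ngt -has_count; apply/hasPn => h.
    move/flattenP => [s /mapP [i _ ->] /mapP [j _ ->]].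
    by rewrite on_e_row eqr_nat (negbTE (neq_bump _ _)).
  move/mapP => [r _ ->]; rewrite on_hypE /diagh /=.
  by rewrite -[X in X == _]add0r; apply/negP => /eqP /addIr /eqP; rewrite eq_sym oner_eq0.
Qed.

Local Close Scope ring_scope.

Theorem theorem2p2 (m n : nat) (a : {ffun 'I_n -> 'I_m.+1}) :
  (1 <= m)%N -> (2 <= n)%N -> f_value_is 2 a (m * n + m).
Proof.
move=> hm hn; split.
  by exists (Fam a); split; [exact: upper | exact: size_Fam].
move=> F hF.
have hn0 : leq 1 n by apply: leq_trans hn.
have := lower (Ordinal hn0) hF.
have e : m * n = m * n.-1 + m by rewrite -mulnSr prednK.
rewrite e; move: (m * n.-1) => M; lia.
Qed.
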